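(* If every map in $(\mathbb{X}, \dagger)$ admits a \textbf{[MP.1,3]}-inverse, then for every object $X \in \mathbb{X}$, $\mathfrak{G}\left[ (\mathbb{X}, \dagger) \right]_X$ is a Markov category with conditionals.
   Context: Let $(\mathbb{X}, \dagger)$ be a dagger additive category (a dagger category enriched in abelian groups with additive dagger and finite biproducts satisfying $\pi_j^\dagger = \iota_j$). A [MP.1,3]-inverse of $f: A \to B$ is a map $f^\bullet: B \to A$ with $f \circ f^\bullet \circ f = f$ and $(f \circ f^\bullet)^\dagger = f \circ f^\bullet$. A map $p$ is $\dagger$-positive if $p = \phi^\dagger \circ \phi$ for some $\phi$. For an object $X$, the Gauss construction $\mathfrak{G}\left[ (\mathbb{X}, \dagger) \right]_X$ is the Markov category with the objects of $\mathbb{X}$, maps $A \to B$ the triples $(f,p,x)$ with $f: A \to B$, $p: B \to B$ $\dagger$-positive, $x: X \to B$; identities $\mathsf{Id}_A = (\mathsf{id}_A,0,0)$; composition $(g,q,y) \circ (f,p,x) = (g \circ f, q + g \circ p \circ g^\dagger, y + g \circ x)$; $A \otimes B = A \oplus B$, $(f,p,x) \otimes (g,q,y) = \left(f \oplus g, p \oplus q, \begin{bmatrix} x \\ y \end{bmatrix}\right)$; copy $\left(\begin{bmatrix} \mathsf{id}_A \\ \mathsf{id}_A \end{bmatrix}, 0, 0\right)$, delete $(0,0,0): A \to \mathsf{0}$. A Markov category has conditionals if every map $F: A \to B \otimes C$ has a map $G: B \otimes A \to C$ with $(\mathsf{Id}_B \otimes G) \circ (\mathsf{copy}_B \otimes \mathsf{Id}_A)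 \circ (\mathsf{Id}_B \otimes \mathsf{del}_C \otimes \mathsf{Id}_A) \circ (F \otimes \mathsf{Id}_A) \circ \mathsf{copy}_A = F$. *)

(* Defs.v *)
From HB Require Import structures.
From mathcomp Require Import all_boot all_algebra.
Set Implicit Arguments.
Unset Strict Implicit.
Unset Printing Implicit Defensive.
Import GRing.Theory.
Local Open Scope ring_scope.

Record DagAddCat := {
  Ob : Type;
  Hom : Ob -> Ob -> zmodType;
  idm : forall A : Ob, Hom A A;
  comp : forall A B C : Ob, Hom B C -> Hom A B -> Hom A C;
  comp_assoc : forall A B C D (h : Hom C D) (g : Hom B C) (f : Hom A B),
      comp h (comp g f) = comp (comp h g) f;
  comp_id_l : forall A B (f : Hom A B), comp (idm B) f = f;
  comp_id_r : forall A B (f : Hom A B), comp f (idm A) = f;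
  comp_addl : forall A B C (g1 g2 : Hom B C) (f : Hom A B),
      comp (g1 + g2) f = comp g1 f + comp g2 f;
  comp_addr : forall A B C (g : Hom B C) (f1 f2 : Hom A B),
      comp g (f1 + f2) = comp g f1 + comp g f2;
  dag : forall A B : Ob, Hom A B -> Hom B A;
  dag_id : forall A, dag (idm A) = idm A;
  dag_comp : forall A B C (g : Hom B C) (f : Hom A B),
      dag (comp g f) = comp (dag f) (dag g);
  dag_invol : forall A B (f : Hom A B), dag (dag f) = f;
  dag_add : forall A B (f g : Hom A B), dag (f + g) = dag f + dag g;
  zob : Ob;
  zob_id : idm zob = 0;
  bp : Ob -> Ob -> Ob;
  pi1 : forall A B, Hom (bp A B) A;
  pi2 : forall A B, Hom (bp A B) B;
  io1 : forall A B, Hom A (bp A B);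
  io2 : forall A B, Hom B (bp A B);
  pi1_io1 : forall A B, comp (pi1 A B) (io1 A B) = idm A;
  pi2_io2 : forall A B, comp (pi2 A B) (io2 A B) = idm B;
  pi1_io2 : forall A B, comp (pi1 A B) (io2 A B) = 0;
  pi2_io1 : forall A B, comp (pi2 A B) (io1 A B) = 0;
  io_pi : forall A B,
      comp (io1 A B) (pi1 A B) + comp (io2 A B) (pi2 A B) = idm (bp A B);
  dag_pi1 : forall A B, dag (pi1 A B) = io1 A B;
  dag_pi2 : forall A B, dag (pi2 A B) = io2 A B
}.

Arguments idm {d} A.
Arguments comp {d A B C}.
Arguments dag {d A B}.
Arguments zob {d}.
Arguments bp {d}.
Arguments pi1 {d} A B.
Arguments pi2 {d} A B.
Arguments io1 {d} A B.
Arguments io2 {d} A B.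

Section Defs.
Variable X : DagAddCat.
Local Notation Ob := (@Ob X).
Local Notation Hom := (@Hom X).

Definition MP13_inverse (A B : Ob) (f : Hom A B) (g : Hom B A) : Prop :=
  comp f (comp g f) = f /\ dag (comp f g) = comp f g.

Definition has_MP13_inverses : Prop :=
  forall (A B : Ob) (f : Hom A B), exists g : Hom B A, MP13_inverse f g.

Definition dag_positive (B : Ob) (p : Hom B B) : Prop :=
  exists (C : Ob) (phi : Hom B C), p = comp (dag phi) phi.

Definition hsum (A A' B B' : Ob) (f : Hom A B) (g : Hom A' B') :
    Hom (bp A A') (bp B B') :=
  comp (io1 B B') (comp f (pi1 A A')) + comp (io2 B B') (comp g (pi2 A A')).

Definition hpair (Y B B' : Ob) (x : Hom Y B) (y : Hom Y B') : Hom Y (bp B B') :=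
  comp (io1 B B') x + comp (io2 B B') y.

Variable Xo : Ob.

(* raw triples (f, p, x); the maps of the Gauss category are the triples
   whose middle component is dagger-positive (predicate gauss_map). *)
Record GTrip (A B : Ob) := GT { gf : Hom A B; gp : Hom B B; gx : Hom Xo B }.

Definition gauss_map (A B : Ob) (F : GTrip A B) : Prop := dag_positive (gp F).

Definition GId (A : Ob) : GTrip A A := GT (idm A) 0 0.

Definition Gcomp (A B C : Ob) (G : GTrip B C) (F : GTrip A B) : GTrip A C :=
  GT (comp (gf G) (gf F))
     (gp G + comp (gf G) (comp (gp F) (dag (gf G))))
     (gx G + comp (gf G) (gx F)).

Definition Gtens (A A' B B' : Ob) (F : GTrip A B) (G : GTrip A' B') :
    GTrip (bp A A') (bp B B') :=
  GT (hsum (gf F) (gf G)) (hsum (gp F) (gp G)) (hpair (gx F) (gx G)).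

Definition Gcopy (A : Ob) : GTrip A (bp A A) := GT (hpair (idm A) (idm A)) 0 0.

Definition Gdel (A : Ob) : GTrip A zob := GT 0 0 0.

Definition Gunitr (B : Ob) : GTrip (bp B zob) B := GT (pi1 B zob) 0 0.

Definition Gassoc (A B C : Ob) : GTrip (bp (bp A B) C) (bp A (bp B C)) :=
  GT (comp (io1 A (bp B C)) (comp (pi1 A B) (pi1 (bp A B) C))
      + comp (io2 A (bp B C))
          (comp (io1 B C) (comp (pi2 A B) (pi1 (bp A B) C)))
      + comp (io2 A (bp B C)) (comp (io2 B C) (pi2 (bp A B) C))) 0 0.

(* Existence of conditionals in the Gauss category: every F : A -> B (x) C
   admits G : B (x) A -> C with
   (Id_B (x) G) o (copy_B (x) Id_A) o (Id_B (x) del_C (x) Id_A)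
      o (F (x) Id_A) o copy_A = F,
   with the associator / right unitor written explicitly. *)
Definition gauss_has_conditionals : Prop :=
  forall (A B C : Ob) (F : GTrip A (bp B C)), gauss_map F ->
  exists G : GTrip (bp B A) C, gauss_map G /\
    Gcomp (Gtens (GId B) G)
     (Gcomp (Gassoc B B A)
      (Gcomp (Gtens (Gcopy B) (GId A))
       (Gcomp (Gtens (Gunitr B) (GId A))
        (Gcomp (Gtens (Gtens (GId B) (Gdel C)) (GId A))
         (Gcomp (Gtens F (GId A)) (Gcopy A)))))) = F.

End Defs.

(* Main.v *)
Require Import Defs.
From mathcomp Require Import all_boot all_algebra.
Set Implicit Arguments.
Unset Strict Implicit.
Unset Printing Implicit Defensive.
Import GRing.Theory.
Local Open Scope ring_scope.
Local Notation comp := Defs.comp.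

Section H.
Variable d : DagAddCat.
Local Notation Hom := (@Defs.Hom d).
Implicit Types A B C Y : Ob d.

Lemma comp0l A B C (f : Hom A B) : comp (0 : Hom B C) f = 0.
Proof. by apply: (@addrI _ (comp 0 f)); rewrite -comp_addl !addr0. Qed.
Lemma comp0r A B C (g : Hom B C) : comp g (0 : Hom A B) = 0.
Proof. by apply: (@addrI _ (comp g 0)); rewrite -comp_addr !addr0. Qed.
Lemma compNl A B C (g : Hom B C) (f : Hom A B) : comp (- g) f = - comp g f.
Proof. by apply: (@addrI _ (comp g f)); rewrite -comp_addl !subrr comp0l. Qed.
Lemma compNr A B C (g : Hom B C) (f : Hom A B) : comp g (- f) = - comp g f.
Proof. by apply: (@addrI _ (comp g f)); rewrite -comp_addr !subrr comp0r. Qed.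
Lemma dag0 A B : dag (0 : Hom A B) = 0.
Proof. by apply: (@addrI _ (dag (0 : Hom A B))); rewrite -dag_add !addr0. Qed.
Lemma dagN A B (f : Hom A B) : dag (- f) = - dag f.
Proof. by apply: (@addrI _ (dag f)); rewrite -dag_add !subrr dag0. Qed.
Lemma dag_io1 A B : dag (io1 A B) = pi1 A B.
Proof. by rewrite -dag_pi1 dag_invol. Qed.
Lemma dag_io2 A B : dag (io2 A B) = pi2 A B.
Proof. by rewrite -dag_pi2 dag_invol. Qed.
Lemma p1i1 A B C (r : Hom C A) : comp (pi1 A B) (comp (io1 A B) r) = r.
Proof. by rewrite comp_assoc pi1_io1 comp_id_l. Qed.
Lemma p2i2 A B C (r : Hom C B) : comp (pi2 A B) (comp (io2 A B) r) = r.
Proof. by rewrite comp_assoc pi2_io2 comp_id_l. Qed.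
Lemma p1i2 A B C (r : Hom C B) : comp (pi1 A B) (comp (io2 A B) r) = 0.
Proof. by rewrite comp_assoc pi1_io2 comp0l. Qed.
Lemma p2i1 A B C (r : Hom C A) : comp (pi2 A B) (comp (io1 A B) r) = 0.
Proof. by rewrite comp_assoc pi2_io1 comp0l. Qed.

Lemma ext_out Y B C (u v : Hom Y (bp B C)) :
  comp (pi1 B C) u = comp (pi1 B C) v -> comp (pi2 B C) u = comp (pi2 B C) v -> u = v.
Proof.
move=> h1 h2; rewrite -(comp_id_l u) -(comp_id_l v) -io_pi !comp_addl.
by rewrite -!comp_assoc h1 h2.
Qed.
Lemma ext_in Y B C (u v : Hom (bp B C) Y) :
  comp u (io1 B C) = comp v (io1 B C) -> comp u (io2 B C) = comp v (io2 B C) -> u = v.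
Proof.
move=> h1 h2; rewrite -(comp_id_r u) -(comp_id_r v) -io_pi !comp_addr.
by rewrite !comp_assoc h1 h2.
Qed.

Lemma p1hs A A' B B' Y (f : Hom A B) (g : Hom A' B') (r : Hom Y (bp A A')) :
  comp (pi1 B B') (comp (hsum f g) r) = comp f (comp (pi1 A A') r).
Proof. by rewrite /hsum comp_addl !comp_addr -!comp_assoc p1i1 p1i2 addr0. Qed.
Lemma p2hs A A' B B' Y (f : Hom A B) (g : Hom A' B') (r : Hom Y (bp A A')) :
  comp (pi2 B B') (comp (hsum f g) r) = comp g (comp (pi2 A A') r).
Proof. by rewrite /hsum comp_addl !comp_addr -!comp_assoc p2i1 p2i2 add0r. Qed.
Lemma p1hs0 A A' B B' (f : Hom A B) (g : Hom A' B') :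
  comp (pi1 B B') (hsum f g) = comp f (pi1 A A').
Proof. by rewrite -(comp_id_r (hsum f g)) p1hs comp_id_r. Qed.
Lemma p2hs0 A A' B B' (f : Hom A B) (g : Hom A' B') :
  comp (pi2 B B') (hsum f g) = comp g (pi2 A A').
Proof. by rewrite -(comp_id_r (hsum f g)) p2hs comp_id_r. Qed.
Lemma hsi1 A A' B B' (f : Hom A B) (g : Hom A' B') :
  comp (hsum f g) (io1 A A') = comp (io1 B B') f.
Proof. by rewrite /hsum comp_addl -!comp_assoc pi1_io1 pi2_io1 comp_id_r !comp0r addr0. Qed.
Lemma hsi2 A A' B B' (f : Hom A B) (g : Hom A' B') :
  comp (hsum f g) (io2 A A') = comp (io2 B B') g.
Proof. by rewrite /hsum comp_addl -!comp_assoc pi1_io2 pi2_io2 comp_id_r !comp0r add0r. Qed.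
Lemma p1hp Y B B' Z (x : Hom Y B) (y : Hom Y B') (r : Hom Z Y) :
  comp (pi1 B B') (comp (hpair x y) r) = comp x r.
Proof. by rewrite /hpair comp_addl comp_addr -!comp_assoc p1i1 p1i2 addr0. Qed.
Lemma p2hp Y B B' Z (x : Hom Y B) (y : Hom Y B') (r : Hom Z Y) :
  comp (pi2 B B') (comp (hpair x y) r) = comp y r.
Proof. by rewrite /hpair comp_addl comp_addr -!comp_assoc p2i1 p2i2 add0r. Qed.
Lemma p1hp0 Y B B' (x : Hom Y B) (y : Hom Y B') : comp (pi1 B B') (hpair x y) = x.
Proof. by rewrite -(comp_id_r (hpair x y)) p1hp comp_id_r. Qed.
Lemma p2hp0 Y B B' (x : Hom Y B) (y : Hom Y B') : comp (pi2 B B') (hpair x y) = y.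
Proof. by rewrite -(comp_id_r (hpair x y)) p2hp comp_id_r. Qed.
Lemma dag_hs A A' B B' (f : Hom A B) (g : Hom A' B') : dag (hsum f g) = hsum (dag f) (dag g).
Proof. by rewrite /hsum dag_add !dag_comp dag_pi1 dag_pi2 dag_io1 dag_io2 !comp_assoc. Qed.
Lemma dag_hp Y B B' (x : Hom Y B) (y : Hom Y B') :
  dag (hpair x y) = comp (dag x) (pi1 B B') + comp (dag y) (pi2 B B').
Proof. by rewrite /hpair dag_add !dag_comp dag_io1 dag_io2. Qed.
Lemma hs00 A A' B B' : hsum (0 : Hom A B) (0 : Hom A' B') = 0.
Proof. by rewrite /hsum !comp0l !comp0r addr0. Qed.
Lemma hp00 Y B B' : hpair (0 : Hom Y B) (0 : Hom Y B') = 0.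
Proof. by rewrite /hpair !comp0r addr0. Qed.

Lemma hsi1r A A' B B' Y (f : Hom A B) (g : Hom A' B') (r : Hom Y A) :
  comp (hsum f g) (comp (io1 A A') r) = comp (io1 B B') (comp f r).
Proof. by rewrite comp_assoc hsi1 -comp_assoc. Qed.
Lemma hsi2r A A' B B' Y (f : Hom A B) (g : Hom A' B') (r : Hom Y A') :
  comp (hsum f g) (comp (io2 A A') r) = comp (io2 B B') (comp g r).
Proof. by rewrite comp_assoc hsi2 -comp_assoc. Qed.
End H.

Section G.
Variable d : DagAddCat.
Variable Xo : Ob d.
Implicit Types A B C : Ob d.
Lemma GTeq A B (F G : GTrip Xo A B) : gf F = gf G -> gp F = gp G -> gx F = gx G -> F = G.
Proof. by case: F; case: G => /= ? ? ? ? ? ? -> -> ->. Qed.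
Lemma gfC A B C (G : GTrip Xo B C) (F : GTrip Xo A B) : gf (Gcomp G F) = comp (gf G) (gf F). Proof. by []. Qed.
Lemma gpC A B C (G : GTrip Xo B C) (F : GTrip Xo A B) : gp (Gcomp G F) = gp G + comp (gf G) (comp (gp F) (dag (gf G))). Proof. by []. Qed.
Lemma gxC A B C (G : GTrip Xo B C) (F : GTrip Xo A B) : gx (Gcomp G F) = gx G + comp (gf G) (gx F). Proof. by []. Qed.
Lemma gfT A A' B B' (F : GTrip Xo A B) (G : GTrip Xo A' B') : gf (Gtens F G) = hsum (gf F) (gf G). Proof. by []. Qed.
Lemma gpT A A' B B' (F : GTrip Xo A B) (G : GTrip Xo A' B') : gp (Gtens F G) = hsum (gp F) (gp G). Proof. by []. Qed.
Lemma gxT A A' B B' (F : GTrip Xo A B) (G : GTrip Xo A' B') : gx (Gtens F G) = hpair (gx F) (gx G). Proof. by []. Qed.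
End G.

Ltac norm0 := repeat (progress rewrite ?dag_add ?dag_comp ?dagN ?dag0 ?dag_pi1 ?dag_pi2 ?dag_io1 ?dag_io2 ?dag_invol ?dag_id
  -?comp_assoc ?comp_addl ?comp0l ?comp0r ?compNl ?compNr ?comp_id_l ?comp_id_r
  ?p1i1 ?p2i2 ?p1i2 ?p2i1 ?p1hs ?p2hs ?p1hs0 ?p2hs0 ?hsi1 ?hsi2 ?hsi1r ?hsi2r ?p1hp ?p2hp ?p1hp0 ?p2hp0 ?dag_hs ?dag_hp ?hs00 ?hp00 ?pi1_io1 ?pi2_io2 ?pi1_io2 ?pi2_io1 ?addr0 ?add0r ?oppr0 ?opprK).

Ltac norm := norm0; try reflexivity; repeat (progress (rewrite comp_addr; norm0)); try reflexivity.

Lemma assocE (d : DagAddCat) (Xo A B C : Ob d) :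
  gf (Gassoc Xo A B C) = hpair (comp (pi1 A B) (pi1 (bp A B) C))
     (hpair (comp (pi2 A B) (pi1 (bp A B) C)) (pi2 (bp A B) C)).
Proof.
rewrite /Gassoc /=; apply: ext_out; rewrite ?p1hp0 ?p2hp0 ?comp_addr; norm.
Qed.

Ltac exts := repeat (apply: ext_out); repeat (apply: ext_in).
Ltac fin := apply: GTeq; rewrite ?gfC ?gpC ?gxC ?gfT ?gpT ?gxT; cbn [gf gp gx GId Gcopy Gdel Gunitr]; exts; norm.

Section Steps.
Variable d : DagAddCat.
Variable Xo : Ob d.
Local Notation Hom := (@Defs.Hom d).
Local Notation GT := (@GT d Xo _ _).

Lemma stepA A B (f : Hom A B) p x :
  Gcomp (Gtens (GT f p x) (GId Xo A)) (Gcopy Xo A) = GT (hpair f (idm A)) (hsum p 0) (hpair x 0).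
Proof. fin. Qed.

Lemma stepBC A B C (f : Hom A (bp B C)) p x :
  Gcomp (Gtens (Gunitr Xo B) (GId Xo A)) (Gcomp (Gtens (Gtens (GId Xo B) (Gdel Xo C)) (GId Xo A))
    (GT (hpair f (idm A)) (hsum p 0) (hpair x 0))) =
  GT (hpair (comp (pi1 B C) f) (idm A)) (hsum (comp (pi1 B C) (comp p (io1 B C))) 0) (hpair (comp (pi1 B C) x) 0).
Proof. fin. Qed.

Lemma stepDE A B (a : Hom A B) P u :
  Gcomp (Gassoc Xo B B A) (Gcomp (Gtens (Gcopy Xo B) (GId Xo A)) (GT (hpair a (idm A)) (hsum P 0) (hpair u 0))) =
  GT (hpair a (hpair a (idm A)))
     (comp (hpair (idm B) (hpair (idm B) (0 : Hom B A))) (comp P (dag (hpair (idm B) (hpair (idm B) (0 : Hom B A))))))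
     (hpair u (hpair u 0)).
Proof. apply: GTeq; rewrite ?gfC ?gpC ?gxC ?gfT ?gpT ?gxT ?assocE; cbn [gf gp gx GId Gcopy Gdel Gunitr]; exts; norm. Qed.

Lemma stepF A B C (a : Hom A B) P u g q y :
  Gcomp (Gtens (GId Xo B) (GT g q y))
   (GT (hpair a (hpair a (idm A)))
     (comp (hpair (idm B) (hpair (idm B) (0 : Hom B A))) (comp P (dag (hpair (idm B) (hpair (idm B) (0 : Hom B A))))))
     (hpair u (hpair u 0))) =
  GT (hpair a (comp g (hpair a (idm A))))
     (hsum 0 q + comp (hpair (idm B) (comp g (io1 B A))) (comp P (dag (hpair (idm B) (comp g (io1 B A))))))
     (hpair u (y + comp g (hpair u 0))) :> GTrip Xo A (bp B C).
Proof. fin. Qed.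
End Steps.

Theorem mainTheorem13 (X : DagAddCat) :
  has_MP13_inverses X -> forall Xo : Ob X, gauss_has_conditionals Xo.
Proof.
move=> MP Xo A B C [f p x] [D [phi /= ->]].
have [h [h1 h2]] := MP _ _ (comp phi (io1 B C)).
pose g1 := comp (dag (comp phi (io2 B C))) (dag h).
pose g2 := comp (pi2 B C) f - comp g1 (comp (pi1 B C) f).
pose g := comp g1 (pi1 B A) + comp g2 (pi2 B A).
pose psi := comp (idm D - comp (comp phi (io1 B C)) h) (comp phi (io2 B C)).
pose y := comp (pi2 B C) x - comp g1 (comp (pi1 B C) x).
exists (GT g (comp (dag psi) psi) y).
split; first by exists D; exists psi.
have e2 : comp phi (comp (io1 B C) h) = comp (dag h) (comp (pi1 B C) (dag phi)).
  by rewrite comp_assoc -h2 !dag_comp dag_io1.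
have K2 (Y : Ob X) (r : Defs.Hom Y D) : comp phi (comp (io1 B C) (comp h r)) =
    comp (dag h) (comp (pi1 B C) (comp (dag phi) r)).
  by move: (congr1 (fun t => comp t r) e2); rewrite /= -!comp_assoc.
have e1 : comp (pi1 B C) (comp (dag phi) (comp (dag h) (comp (pi1 B C) (dag phi)))) = comp (pi1 B C) (dag phi).
  by move: (congr1 dag h1); rewrite !dag_comp dag_io1 -!comp_assoc.
have K1 (Y : Ob X) (r : Defs.Hom Y D) : comp (pi1 B C) (comp (dag phi) (comp phi (comp (io1 B C) (comp h r)))) =
    comp (pi1 B C) (comp (dag phi) r).
  by rewrite K2; move: (congr1 (fun t => comp t r) e1); rewrite /= -!comp_assoc.
have K3 : comp (dag h) (comp (pi1 B C) (comp (dag phi) (comp phi (io1 B C)))) = comp phi (io1 B C).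
  by move: (congr1 (fun t => comp t (comp phi (io1 B C))) e2); rewrite /= -!comp_assoc => <-; rewrite -!comp_assoc in h1.
rewrite stepA stepBC stepDE stepF.
apply: GTeq; cbn [gf gp gx]; rewrite /g /y /g2 /g1 /psi; exts.
all: norm.
- by rewrite addrC subrK.
- by rewrite K1.
- by rewrite K3.
- rewrite !K1 K2.
  by rewrite subrr subr0 subrK.
- by rewrite subrK.
Qed.
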